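(* Assume the KKT set $\Omega^*$ is nonempty and fix an initial point $\omega_0=(X^{(0)},Y^{(0)},V^{(0)})$. Then there exist parameters $(\alpha_k,\beta_k)\in\mathcal{S}$, $k\ge0$, such that the sequence $\{\omega_k\}$ generated by the re-parameterized LADMM iteration (defined in the context) converges to a KKT point of $\min_{X,Y}F(X)+G(Y)$ subject to $X=Y$.
   Context: $F,G:\mathbb{R}^{p\times p}\to\mathbb{R}\cup\{+\infty\}$ are proper, closed, convex. A KKT point is $\omega^*=(X^*,Y^*,V^* )$ with $X^*=Y^*$, $-V^*\in\partial F(X^* )$, $V^*\in\partial G(Y^* )$; $\Omega^*$ is the set of KKT points. $\circ$ is the entrywise (Hadamard) product; for a matrix $a$ with positive entries, $1/a$ and $\sqrt{a}$ are entrywise. $\mathcal{S}:=\{(\alpha,\beta)\in\mathbb{R}^{p\times p}\times\mathbb{R}^{p\times p}: 0<\alpha_{ij}<\beta_{ij}\ \forall i,j\}$. Writing $\omega_k=(X^{(k)},Y^{(k)},V^{(k)})$, the re-parameterized LADMM iteration with parameters $(\alpha_k,\beta_k)$ is \[ \begin{aligned} X^{(k+1)} &= \arg\min_X\Big\{F(X)+\tfrac12\Big\|\tfrac{1}{\sqrt{\alpha_k}}\circ\Big(X - X^{(k)} + \alpha_k\circ\big(V^{(k)}+\tfrac{1}{\beta_k}\circ(X^{(k)}-Y^{(k)})\big)\Big)\Big\|_F^2\Big\},\\ Y^{(k+1)} &= \arg\min_Y\Big\{G(Y)+\tfrac12\Big\|\tfrac{1}{\sqrt{\beta_k}}\circ\big(Y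 - X^{(k+1)} - \beta_k\circ V^{(k)}\big)\Big\|_F^2\Big\},\\ V^{(k+1)} &= V^{(k)} + \tfrac{1}{\beta_k}\circ\big(X^{(k+1)} - Y^{(k+1)}\big). \end{aligned} \] Convergence of triples is in the norm $\|\omega\|_F^2=\|X\|_F^2+\|Y\|_F^2+\|V\|_F^2$. *)

(* Defs.v *)
From HB Require Import structures.
From mathcomp Require Import all_boot all_order all_algebra.
From mathcomp Require Import all_classical all_reals all_analysis.
Set Implicit Arguments. Unset Strict Implicit. Unset Printing Implicit Defensive.
Import Order.TTheory GRing.Theory Num.Theory.
Import numFieldNormedType.Exports.
Local Open Scope classical_set_scope.
Local Open Scope ring_scope.

Section Defs.
Variables (R : realType) (p : nat).
Notation M := 'M[R]_p.

Definition frob_inner (A B : M) : R := \sum_(i < p) \sum_(j < p) A i j * B i j.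

Definition frob_norm (A : M) : R := Num.sqrt (\sum_(i < p) \sum_(j < p) (A i j) ^+ 2).

Definition hadamard (a b : M) : M := \matrix_(i, j) (a i j * b i j).

Definition ew_inv (a : M) : M := \matrix_(i, j) (a i j)^-1.

Definition ew_sqrt (a : M) : M := \matrix_(i, j) Num.sqrt (a i j).

Definition proper_fun (F : M -> \bar R) : Prop :=
  (forall X, F X <> -oo%E) /\ (exists X, F X <> +oo%E).

Definition closed_fun (F : M -> \bar R) : Prop := lower_semicontinuous F.

Definition convex_fun (F : M -> \bar R) : Prop :=
  forall (X Y : M) (t : R), 0 < t < 1 ->
    (F (t *: X + (1 - t) *: Y)%R <= t%:E * F X + (1 - t)%R%:E * F Y)%E.

Definition proper_closed_convex (F : M -> \bar R) : Prop :=
  [/\ proper_fun F, closed_fun F & convex_fun F].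

Definition subdiff (F : M -> \bar R) (X V : M) : Prop :=
  F X \is a fin_num /\
  forall Z : M, (F X + (frob_inner V (Z - X))%:E <= F Z)%E.

Definition triple := (M * M * M)%type.
Definition tX (w : triple) : M := w.1.1.
Definition tY (w : triple) : M := w.1.2.
Definition tV (w : triple) : M := w.2.

Definition triple_norm (w : triple) : R :=
  Num.sqrt (frob_norm (tX w) ^+ 2 + frob_norm (tY w) ^+ 2 + frob_norm (tV w) ^+ 2).

Definition triple_sub (w w' : triple) : triple :=
  (tX w - tX w', tY w - tY w', tV w - tV w').

Definition KKT (F G : M -> \bar R) (w : triple) : Prop :=
  [/\ tX w = tY w, subdiff F (tX w) (- tV w) & subdiff G (tY w) (tV w)].

Definition in_S (a b : M) : Prop := forall i j, 0 < a i j < b i j.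

Definition is_argmin (phi : M -> \bar R) (X : M) : Prop :=
  forall X' : M, (phi X <= phi X')%E.

Definition ladmm_X_obj (F : M -> \bar R) (a b : M) (w : triple) (X : M) : \bar R :=
  (F X + (2^-1 * frob_norm (hadamard (ew_inv (ew_sqrt a))
     (X - tX w + hadamard a (tV w + hadamard (ew_inv b) (tX w - tY w)))) ^+ 2)%:E)%E.

Definition ladmm_Y_obj (G : M -> \bar R) (b : M) (w : triple) (Xn : M) (Y : M) : \bar R :=
  (G Y + (2^-1 * frob_norm (hadamard (ew_inv (ew_sqrt b))
     (Y - Xn - hadamard b (tV w))) ^+ 2)%:E)%E.

Definition ladmm_step (F G : M -> \bar R) (a b : M) (w w' : triple) : Prop :=
  [/\ is_argmin (ladmm_X_obj F a b w) (tX w'),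
      is_argmin (ladmm_Y_obj G b w (tX w')) (tY w') &
      tV w' = tV w + hadamard (ew_inv b) (tX w' - tY w')].

Definition ladmm_seq (F G : M -> \bar R) (alpha beta : nat -> M) (w0 : triple)
    (omega : nat -> triple) : Prop :=
  omega 0%N = w0 /\ forall k, ladmm_step F G (alpha k) (beta k) (omega k) (omega k.+1).

End Defs.

(* Main.v *)
Require Import Defs.
From HB Require Import structures.
From mathcomp Require Import all_boot all_order all_algebra.
From mathcomp Require Import all_classical all_reals all_analysis.
From mathcomp Require Import ring lra.
Import Order.TTheory GRing.Theory Num.Theory.
Import numFieldNormedType.Exports.
Local Open Scope classical_set_scope.
Local Open Scope ring_scope.

Set Implicit Arguments. Unset Strict Implicit.


Section Alg.
Variables (R : realType) (p : nat).
Notation M := 'M[R]_p.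
Notation ip := (@frob_inner R p).

Lemma sum2_ext (f g : 'I_p -> 'I_p -> R) : (forall i j, f i j = g i j) ->
  \sum_(i < p) \sum_(j < p) f i j = \sum_(i < p) \sum_(j < p) g i j.
Proof. by move=> h; apply: eq_bigr => i _; apply: eq_bigr => j _; apply: h. Qed.

Lemma sum2D (f g : 'I_p -> 'I_p -> R) :
  \sum_(i < p) \sum_(j < p) f i j + \sum_(i < p) \sum_(j < p) g i j =
  \sum_(i < p) \sum_(j < p) (f i j + g i j).
Proof. by rewrite -big_split; apply: eq_bigr => i _; rewrite -big_split. Qed.

Lemma sum2N (f : 'I_p -> 'I_p -> R) :
  - \sum_(i < p) \sum_(j < p) f i j = \sum_(i < p) \sum_(j < p) (- f i j).
Proof. by rewrite -sumrN; apply: eq_bigr => i _; rewrite -sumrN. Qed.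

Lemma sum2Z (c : R) (f : 'I_p -> 'I_p -> R) :
  c * \sum_(i < p) \sum_(j < p) f i j = \sum_(i < p) \sum_(j < p) (c * f i j).
Proof. by rewrite mulr_sumr; apply: eq_bigr => i _; rewrite mulr_sumr. Qed.

Lemma sum2B (f g : 'I_p -> 'I_p -> R) :
  \sum_(i < p) \sum_(j < p) f i j - \sum_(i < p) \sum_(j < p) g i j =
  \sum_(i < p) \sum_(j < p) (f i j - g i j).
Proof. by rewrite sum2N sum2D. Qed.


End Alg.

Ltac ipsolve := rewrite /frob_inner;
  repeat rewrite ?sum2Z ?sum2B ?sum2D ?sum2N;
  apply: sum2_ext => i j; rewrite ?mxE; (ring || (field; done)).

Section Alg2.
Variables (R : realType) (p : nat).
Notation M := 'M[R]_p.
Notation ip := (@frob_inner R p).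

Lemma frob_norm_sq (A : M) : frob_norm A ^+ 2 = ip A A.
Proof.
rewrite /frob_norm sqr_sqrtr; last by apply: sumr_ge0 => i _; apply: sumr_ge0 => j _; exact: sqr_ge0.
by apply: sum2_ext => i j; rewrite expr2.
Qed.

Lemma ip_ge0 (A : M) : 0 <= ip A A.
Proof. by apply: sumr_ge0 => i _; apply: sumr_ge0 => j _; rewrite -expr2 sqr_ge0. Qed.

Lemma ipC (A B : M) : ip A B = ip B A.
Proof. ipsolve. Qed.

Lemma fejer_id (x y v x1 y1 xs vs : M) :
  let v1 := v + 4^-1 *: (x1 - y1) in
  let u := (x - x1) - v - 4^-1 *: (x - y) in
  (3/4) * ip (x - xs) (x - xs) + 4 * ip (v - vs) (v - vs) + 4^-1 * ip (y - xs) (y - xs)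
  - ((3/4) * ip (x1 - xs) (x1 - xs) + 4 * ip (v1 - vs) (v1 - vs) + 4^-1 * ip (y1 - xs) (y1 - xs))
  - ((3/4) * ip (x - x1) (x - x1) + 4 * ip (v1 - v) (v1 - v) + 4^-1 * ip (y1 - y) (y1 - y))
  = 2 * (ip (u + vs) (x1 - xs) + ip (v1 - vs) (y1 - xs) + ip (v1 - v) (y1 - y)).
Proof. move=> v1 u; rewrite /v1 /u /frob_inner; repeat rewrite ?sum2Z ?sum2B ?sum2D ?sum2N. apply: sum2_ext => i j; rewrite ?mxE; field; done. Qed.

End Alg2.


Section Top.
Variable R : realType.

Lemma small_t (A B K : R) : 0 <= K ->
  (forall t, 0 < t < 1 -> A <= B + t * K) -> A <= B.
Proof.
move=> K0 H; rewrite leNgt; apply/negP => BA.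
pose d := A - B; have d0 : 0 < d by rewrite subr_gt0.
pose t := d / (2 * (d + K)).
have dK : 0 < 2 * (d + K) by nra.
have ht : t * (2 * (d + K)) = d by rewrite /t mulfVK // gt_eqF.
have t0 : 0 < t by rewrite /t divr_gt0.
have t1 : t < 1 by rewrite -(ltr_pM2r dK) mul1r ht; lra.
have td : 0 < t * d by rewrite mulr_gt0.
have := H t; rewrite t0 t1 /= => /(_ isT); rewrite /d in ht td *; nra.
Qed.

Lemma incr_ge (f : nat -> nat) : increasing_seq f -> forall n, (n <= f n)%N.
Proof.
move=> hf; elim=> // n IH.
have : (f n < f n.+1)%N.
  by move/increasing_seqP: hf => /(_ n); rewrite ltEnat.
by apply: leq_ltn_trans.
Qed.

Lemma subseq_near (P : nat -> Prop) (f : nat -> nat) : increasing_seq f ->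
  (\forall n \near \oo, P n) -> \forall n \near \oo, P (f n).
Proof.
move=> hf [N _ HN]; exists N => // n /= Nn; apply: HN => /=.
by apply: (@leq_trans n) => //; exact: incr_ge.
Qed.

Lemma subseq_cvg {T : topologicalType} (u : nat -> T) (l : T) (f : nat -> nat) :
  increasing_seq f -> u @ \oo --> l -> (u \o f) @ \oo --> l.
Proof. by move=> hf hu A /hu; apply: subseq_near. Qed.

Lemma incr_comp (f g : nat -> nat) : increasing_seq f -> increasing_seq g ->
  increasing_seq (f \o g).
Proof. by move=> hf hg m n /=; rewrite hf; exact: hg. Qed.

Lemma bounded_by (u : nat -> R) (M : R) : (forall n, `|u n| <= M) -> bounded_fun u.
Proof.
move=> hM; rewrite /bounded_near; near=> K => n _ /=.
apply: le_trans (hM n) _; near: K; apply: nbhs_pinfty_ge; exact: num_real.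
Unshelve. all: end_near. Qed.

Lemma multiBW (T : finType) (u : T -> nat -> R) :
  (forall t, exists M, forall n, `|u t n| <= M) ->
  exists2 f : nat -> nat, increasing_seq f & forall t, cvgn (u t \o f).
Proof.
move=> hb.
suff: forall s : seq T, exists2 f : nat -> nat, increasing_seq f &
    forall t, t \in s -> cvgn (u t \o f).
  by move=> /(_ (enum T)) [f hf H]; exists f => // t; apply: H; rewrite mem_enum.
elim=> [|t s [f hf IH]]; first by exists id.
have [M hM] := hb t.
have [g hg cg] := @bolzano_weierstrass R (u t \o f) (@bounded_by (u t \o f) M (fun n => hM (f n))).
exists (f \o g); first exact: incr_comp.
move=> t'; rewrite inE => /orP [/eqP -> //|t's].
have /cvg_ex [l hl] := IH t' t's.
by apply/cvg_ex; exists l; exact: (@subseq_cvg _ (u t' \o f)).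
Qed.

End Top.


Section Mx.
Variables (R : realType) (p : nat).
Notation M := 'M[R]_p.
Notation ip := (@frob_inner R p).

Definition ecvg (A : nat -> M) (L : M) :=
  forall i j, (fun n => A n i j) @ \oo --> L i j.

Lemma cvg_sum_ord (u : 'I_p -> nat -> R) (l : 'I_p -> R) :
  (forall i, u i @ \oo --> l i) ->
  (fun n => \sum_(i < p) u i n) @ \oo --> \sum_(i < p) l i.
Proof.
move=> h; apply: (@cvg_big R _ +%R 0 xpredT add_continuous) => // i _; exact: h.
Qed.

Lemma cvg_ip (A B : nat -> M) LA LB : ecvg A LA -> ecvg B LB ->
  (fun n => ip (A n) (B n)) @ \oo --> ip LA LB.
Proof.
move=> hA hB; rewrite /frob_inner; apply: cvg_sum_ord => i.
apply: cvg_sum_ord => j; exact: cvgM.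
Qed.

Lemma ecvgD A B LA LB : ecvg A LA -> ecvg B LB -> ecvg (fun n => A n + B n) (LA + LB).
Proof. move=> hA hB i j; rewrite mxE; under eq_cvg do rewrite mxE; exact: cvgD. Qed.

Lemma ecvgN A LA : ecvg A LA -> ecvg (fun n => - A n) (- LA).
Proof. move=> hA i j; rewrite mxE; under eq_cvg do rewrite mxE; exact: cvgN. Qed.

Lemma ecvgB A B LA LB : ecvg A LA -> ecvg B LB -> ecvg (fun n => A n - B n) (LA - LB).
Proof. by move=> hA hB; apply: ecvgD => //; apply: ecvgN. Qed.

Lemma ecvgZ (c : R) A LA : ecvg A LA -> ecvg (fun n => c *: A n) (c *: LA).
Proof. move=> hA i j; rewrite mxE; under eq_cvg do rewrite mxE; exact: cvgMr. Qed.

Lemma ecvg_cst (L : M) : ecvg (fun=> L) L.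
Proof. move=> i j; exact: cvg_cst. Qed.

Lemma ecvg_sub A L (f : nat -> nat) : increasing_seq f -> ecvg A L -> ecvg (A \o f) L.
Proof.
move=> hf hA i j B /(hA i j) [N _ HN]; exists N => // n /= Nn; apply: HN => /=.
apply: (@leq_trans n) => //; elim: n {Nn} => // n IH.
have : (f n < f n.+1)%N by move/increasing_seqP: hf => /(_ n); rewrite ltEnat.
exact: leq_ltn_trans.
Qed.

Lemma lsc_le (F : M -> \bar R) (X : nat -> M) Xb (b : nat -> R) l :
  lower_semicontinuous F -> ecvg X Xb -> (forall n, (F (X n) <= (b n)%:E)%E) ->
  b @ \oo --> l -> (F Xb <= l%:E)%E.
Proof.
move=> hF hX hb bl; rewrite leNgt; apply/negP => lt.
have [a la aF] : exists2 a, l < a & (a%:E < F Xb)%E.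
  move: lt; case: (F Xb) => [r| |] //=.
  - by rewrite lte_fin => lr; exists ((l + r) / 2); rewrite ?lte_fin; lra.
  - by move=> _; exists (l + 1); [lra | exact: ltry].
have [V /nbhs_ballP [e e0 eV] HV] := hF Xb a aF.
have H1 : \forall n \near \oo, forall ij : 'I_p * 'I_p,
    `|Xb ij.1 ij.2 - X n ij.1 ij.2| < e.
  apply: filter_forall => -[i j] /=.
  by move/cvgrPdist_lt: (hX i j) => /(_ e e0).
have H2 : \forall n \near \oo, b n < a by exact: (cvgr_lt l bl a la).
have [n [h1 h2]] := filter_ex (filterI H1 H2).
have : V (X n).
  apply: eV; rewrite -ball_normE /ball_ /= [X in (X < _)%R]/Num.norm /= mx_normrE.
  elim/big_ind: _ => [|x y hx hy|ij _]; [exact: e0|by rewrite gt_max hx hy|].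
  by rewrite !mxE; exact: h1.
move/HV => /lt_le_trans /(_ (hb n)); rewrite lte_fin; lra.
Qed.

End Mx.


Section Sub.
Variables (R : realType) (p : nat).
Notation M := 'M[R]_p.
Notation ip := (@frob_inner R p).

Lemma subdiff_mono (F : M -> \bar R) a b g h :
  subdiff F a g -> subdiff F b h -> 0 <= ip (g - h) (a - b).
Proof.
move=> [fa Ha] [fb Hb].
have := Ha b; have := Hb a.
rewrite -(fineK fa) -(fineK fb) -!EFinD !lee_fin => h1 h2.
have -> : ip (g - h) (a - b) = - (ip g (b - a) + ip h (a - b)) by ipsolve.
lra.
Qed.

Lemma argmin_subdiff (F : M -> \bar R) (k : R) (C X : M) :
  proper_fun F -> convex_fun F -> 0 < k ->
  (forall X', (F X + (2^-1 * (k * ip (X - C) (X - C)))%:E <=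
               F X' + (2^-1 * (k * ip (X' - C) (X' - C)))%:E)%E) ->
  subdiff F X (k *: (C - X)).
Proof.
move=> [Fninf [X0 FX0]] Hc k0 Hmin.
have fX : F X \is a fin_num.
  rewrite fin_numE; apply/andP; split; first by apply/eqP; exact: Fninf.
  apply/eqP => FXoo; have := Hmin X0; rewrite FXoo /=.
  move: FX0 (Fninf X0); case: (F X0) => // r _ _.
split => // Z.
case FZ: (F Z) => [fz| |]; [| by rewrite leey | by move: (Fninf Z); rewrite FZ].
rewrite -(fineK fX) -EFinD lee_fin.
set fx := fine (F X).
apply: (@small_t R _ _ ((k / 2) * ip (Z - X) (Z - X))).
  by apply: mulr_ge0; [apply: divr_ge0; lra | exact: ip_ge0].
move=> t /andP[t0 t1].
have hc := Hc Z X t (introT andP (conj t0 t1)).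
rewrite FZ -(fineK fX) -/fx -!EFinM -EFinD in hc.
have hm := Hmin (t *: Z + (1 - t) *: X).
have := le_trans hm (leeD2r _ hc).
rewrite -(fineK fX) -/fx -!EFinD lee_fin.
have -> : ip (t *: Z + (1 - t) *: X - C) (t *: Z + (1 - t) *: X - C) =
  ip (X - C) (X - C) + 2 * t * ip (X - C) (Z - X) + t ^+ 2 * ip (Z - X) (Z - X).
  by ipsolve.
have -> : ip (k *: (C - X)) (Z - X) = - k * ip (X - C) (Z - X) by ipsolve.
move=> h.
have hh : t * (fx - k * ip (X - C) (Z - X)) <= t * (fz + t * (k / 2 * ip (Z - X) (Z - X))).
  nra.
rewrite ler_pM2l // in hh; lra.
Qed.

Lemma entry_sq_le (A : M) i j : A i j ^+ 2 <= ip A A.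
Proof.
rewrite /frob_inner (bigD1 i) //= (bigD1 j) //= -expr2 -addrA lerDl.
apply: addr_ge0; first by apply: sumr_ge0 => j' _; rewrite -expr2 sqr_ge0.
by apply: sumr_ge0 => i' _; apply: sumr_ge0 => j' _; rewrite -expr2 sqr_ge0.
Qed.

Lemma entry_bound (A : M) i j : `|A i j| <= 1 + ip A A.
Proof.
apply: le_trans (_ : 1 + A i j ^+ 2 <= _); last by rewrite lerD2l entry_sq_le.
have e : `|A i j| ^+ 2 = A i j ^+ 2 by rewrite -normrX ger0_norm ?sqr_ge0.
have := sqr_ge0 (`|A i j| - 1); rewrite -e; nra.
Qed.

End Sub.


Section Ex.
Variables (R : realType) (p : nat).
Notation M := 'M[R]_p.
Notation ip := (@frob_inner R p).

Lemma argmin_exists (F : M -> \bar R) (k : R) (C z0 g0 : M) :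
  proper_fun F -> lower_semicontinuous F -> subdiff F z0 g0 -> 0 < k ->
  exists X, forall X', (F X + (2^-1 * (k * ip (X - C) (X - C)))%:E <=
               F X' + (2^-1 * (k * ip (X' - C) (X' - C)))%:E)%E.
Proof.
move=> [Fninf [X0 FX0]] Flsc [fz0 Hz0] k0.
pose q (Y : M) : R := 2^-1 * (k * ip (Y - C) (Y - C)).
pose fz := fine (F z0).
pose L0 := fz + ip g0 (C - z0) - ip g0 g0 / k.
have key : forall (Y : M) (r : R), (F Y + (q Y)%:E)%E = r%:E ->
    L0 + k / 4 * ip (Y - C) (Y - C) <= r.
  move=> Y r; case FY: (F Y) => [y| |]; last by have := Fninf Y.
  2: by [].
  case=> ry.
  have := Hz0 Y; rewrite FY -(fineK fz0) -/fz -EFinD lee_fin => h.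
  have sq := ip_ge0 (k *: (Y - C) + 2 *: g0).
  have e1 : ip (k *: (Y - C) + 2 *: g0) (k *: (Y - C) + 2 *: g0) =
    k^+2 * ip (Y - C) (Y - C) + 4 * k * ip g0 (Y - C) + 4 * ip g0 g0 by ipsolve.
  have e2 : ip g0 (Y - z0) = ip g0 (C - z0) + ip g0 (Y - C) by ipsolve.
  have e3 : 4 * k * (ip g0 (Y - C) + k / 4 * ip (Y - C) (Y - C) + ip g0 g0 / k) =
     k^+2 * ip (Y - C) (Y - C) + 4 * k * ip g0 (Y - C) + 4 * ip g0 g0.
    by field; rewrite gt_eqF.
  have k4 : 0 < 4 * k by rewrite mulr_gt0.
  have h4 : 0 <= ip g0 (Y - C) + k / 4 * ip (Y - C) (Y - C) + ip g0 g0 / k.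
    by rewrite -(pmulr_rge0 _ k4) e3 -e1.
  rewrite -ry /q /L0; rewrite e2 in h; lra.
pose S := [set r : R | exists Y, (F Y + (q Y)%:E)%E = r%:E].
have S0 : S !=set0.
  move: FX0 (Fninf X0); case FX: (F X0) => [x0| |] // _ _.
  by exists (x0 + q X0), X0; rewrite FX.
have lbS : has_lbound S.
  exists L0 => r [Y hY]; have := key Y r hY.
  have : 0 <= k / 4 * ip (Y - C) (Y - C).
    by apply: mulr_ge0; [apply: divr_ge0; lra | exact: ip_ge0].
  lra.
pose m := inf S.
have hinf : has_inf S by split.
have hseq : forall n : nat, exists Yr : M * R,
    (F Yr.1 + (q Yr.1)%:E)%E = Yr.2%:E /\ Yr.2 < m + n.+1%:R^-1.
  move=> n; have hn : 0 < n.+1%:R^-1 :> R by rewrite invr_gt0 ltr0n.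
  have [r [Y hY] hr] := inf_adherent hn hinf.
  by exists (Y, r).
have [Yr hYr] := choice hseq.
pose Y n := (Yr n).1.
pose K := 4 / k * (m + 1 - L0).
have bnd : forall n i j, `|Y n i j| <= `|C i j| + (1 + K).
  move=> n i j.
  have -> : Y n i j = (Y n - C) i j + C i j by rewrite !mxE subrK.
  apply: le_trans (ler_normD _ _) _; rewrite addrC lerD2l.
  apply: le_trans (entry_bound _ i j) _; rewrite lerD2l.
  have [h1 h2] := hYr n.
  have := key _ _ h1.
  have h3 : n.+1%:R^-1 <= 1 :> R by rewrite invf_le1 ?ltr0n // ler1n.
  have kk : k * (4 / k) = 4 by field; rewrite gt_eqF.
  have k4 : 0 <= 4 / k by apply: divr_ge0; lra.
  rewrite /K -/(Y n) => h.
  have h5 : k / 4 * ip (Y n - C) (Y n - C) <= m + 1 - L0.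
    move: h h2 h3; generalize (k / 4 * ip (Y n - C) (Y n - C)) m L0 ((Yr n).2) (n.+1%:R^-1 : R) => a b c d e; lra.
  have h6 := ler_wpM2l k4 h5.
  apply: le_trans h6; rewrite mulrA.
  have -> : 4 / k * (k / 4) = 1 by field; rewrite gt_eqF.
  by rewrite mul1r.
have hb : forall ij : 'I_p * 'I_p, exists Mb : R, forall n, `|Y n ij.1 ij.2| <= Mb.
  by move=> ij; eexists; move=> n; exact: bnd.
have [f hf hc] := multiBW hb.
pose Xb : M := \matrix_(i, j) limn (fun n => Y (f n) i j).
have hX : ecvg (Y \o f) Xb.
  by move=> i j; rewrite mxE; exact: (hc (i, j)).
have hle : (F Xb <= (m - q Xb)%:E)%E.
  apply: (lsc_le (X := Y \o f) (b := fun n => m + (f n).+1%:R^-1 - q (Y (f n)))) => //.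
    move=> n /=; have [h1 h2] := hYr (f n); move: h1 h2; rewrite -/(Y (f n)).
    case FY: (F (Y (f n))) => [y| |]; last by have := Fninf (Y (f n)).
      case=> <- h2; rewrite lee_fin.
      move: h2; generalize ((f n).+1%:R^-1 : R) m (q (Y (f n))) => a b c; lra.
    by [].
  apply: cvgB.
    rewrite -[X in _ --> X]addr0; apply: cvgD; first exact: cvg_cst.
    exact: (subseq_cvg hf (@cvg_harmonic R)).
  apply: cvgM; first exact: cvg_cst.
  apply: cvgM; first exact: cvg_cst.
  by apply: cvg_ip; apply: ecvgB => //; exact: ecvg_cst.
exists Xb => X'.
have h1 : (F Xb + (q Xb)%:E <= m%:E)%E.
  by move: (leeD2r (q Xb)%:E hle); rewrite -EFinD subrK.
apply: le_trans h1 _.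
case FX': (F X') => [x'| |]; [ | by rewrite leey | by have := Fninf X'].
rewrite -EFinD lee_fin; apply: (ge_inf lbS).
by exists X'; rewrite FX'.
Qed.
End Ex.


Section Fin.
Variables (R : realType) (p : nat).
Notation M := 'M[R]_p.
Notation ip := (@frob_inner R p).

Lemma sq_cvg0 (a b : nat -> R) : (forall k, a k ^+ 2 <= b k) -> b @ \oo --> 0 ->
  a @ \oo --> 0.
Proof.
move=> hab hb; apply/cvgrPdist_lt => e e0.
have e2 : 0 < e ^+ 2 by rewrite exprn_gt0.
near=> k; rewrite sub0r normrN.
have hk : b k < e ^+ 2 by near: k; exact: (cvgr_lt 0 hb).
have h := hab k.
have ea : `|a k| ^+ 2 = a k ^+ 2 by rewrite -normrX ger0_norm ?sqr_ge0.
have n0 := normr_ge0 (a k).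
rewrite ltNge; apply/negP => he; nra.
Unshelve. all: end_near. Qed.

Lemma ecvg0_of (A : nat -> M) (b : nat -> R) (c : R) :
  (forall k, ip (A k) (A k) <= c * b k) -> b @ \oo --> 0 -> ecvg A 0.
Proof.
move=> hA hb i j; rewrite mxE.
apply: (@sq_cvg0 _ (fun k => c * b k)).
  by move=> k; apply: le_trans (entry_sq_le _ i j) (hA k).
by rewrite -(mulr0 c); apply: cvgM => //; exact: cvg_cst.
Qed.

Lemma ecvg_ext (A B : nat -> M) L : (forall k, A k = B k) -> ecvg A L -> ecvg B L.
Proof. by move=> h; have -> : A = B by apply/funext. Qed.

Lemma subdiff_limit (F : M -> \bar R) (X U : nat -> M) xb gb :
  proper_fun F -> lower_semicontinuous F ->
  (forall n, subdiff F (X n) (U n)) -> ecvg X xb -> ecvg U gb -> subdiff F xb gb.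
Proof.
move=> [Fninf [X0 FX0]] lF hs hX hU.
have bound : forall Z fz, F Z = fz%:E -> (F xb <= (fz - ip gb (Z - xb))%:E)%E.
  move=> Z fz FZ.
  apply: (lsc_le (X := X) (b := fun n => fz - ip (U n) (Z - X n))) => //.
    move=> n; have [fn Hn] := hs n; have := Hn Z.
    rewrite FZ -(fineK fn) -EFinD lee_fin => h.
    rewrite lee_fin; lra.
  apply: cvgB; first exact: cvg_cst.
  by apply: cvg_ip => //; apply: ecvgB => //; exact: ecvg_cst.
have fxb : F xb \is a fin_num.
  rewrite fin_numE; apply/andP; split; first by apply/eqP; exact: Fninf.
  move: FX0 (Fninf X0) (@bound X0); case: (F X0) => // x0 _ _ /(_ x0 erefl) h.
  by apply/eqP => e; rewrite e in h.
split => // Z.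
case FZ: (F Z) => [fz| |]; [ | by rewrite leey | by have := Fninf Z].
have := bound Z fz FZ; rewrite -(fineK fxb) -EFinD !lee_fin; lra.
Qed.

End Fin.


Section Steps.
Variables (R : realType) (p : nat).
Notation M := 'M[R]_p.
Notation ip := (@frob_inner R p).
Notation c1 := (const_mx 1 : M).
Notation c4 := (const_mx 4 : M).

Definition Cx (w : triple R p) : M := tX w - (tV w + 4^-1 *: (tX w - tY w)).

Lemma Xobj_eq (F : M -> \bar R) w X : ladmm_X_obj F c1 c4 w X =
  (F X + (2^-1 * (1 * ip (X - Cx w) (X - Cx w)))%:E)%E.
Proof.
rewrite /ladmm_X_obj frob_norm_sq; congr (_ + (2^-1 * _)%:E)%E.
rewrite /frob_inner /Cx sum2Z; apply: sum2_ext => i j.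
rewrite !mxE sqrtr1 invr1; field; done.
Qed.

Lemma sqrt4 : Num.sqrt (4:R) = 2.
Proof.
have -> : (4:R) = 2 ^+ 2 by rewrite expr2 -natrM.
by rewrite sqrtr_sqr ger0_norm.
Qed.

Lemma Yobj_eq (G : M -> \bar R) w Xn Y : ladmm_Y_obj G c4 w Xn Y =
  (G Y + (2^-1 * (4^-1 * ip (Y - (Xn + 4 *: tV w)) (Y - (Xn + 4 *: tV w))))%:E)%E.
Proof.
rewrite /ladmm_Y_obj frob_norm_sq; congr (_ + (2^-1 * _)%:E)%E.
rewrite /frob_inner sum2Z; apply: sum2_ext => i j.
rewrite !mxE sqrt4; field; done.
Qed.

Lemma hadamard_c4 (A : M) : hadamard (ew_inv c4) A = 4^-1 *: A.
Proof. by apply/matrixP => i j; rewrite !mxE. Qed.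

Lemma step_sub (F G : M -> \bar R) w w' :
  proper_fun F -> convex_fun F -> proper_fun G -> convex_fun G ->
  ladmm_step F G c1 c4 w w' ->
  [/\ subdiff F (tX w') (tX w - tX w' - tV w - 4^-1 *: (tX w - tY w)),
      subdiff G (tY w') (tV w') & tV w' = tV w + 4^-1 *: (tX w' - tY w')].
Proof.
move=> pF cF pG cG [hX hY hV].
rewrite hadamard_c4 in hV.
split => //.
- have := @argmin_subdiff R p F 1 (Cx w) (tX w') pF cF ltr01.
  rewrite scale1r.
  have -> : Cx w - tX w' = tX w - tX w' - tV w - 4^-1 *: (tX w - tY w).
    by apply/matrixP => i j; rewrite !mxE; ring.
  apply => X'; have := hX X'; by rewrite !Xobj_eq.
- have k0 : 0 < 4^-1 :> R by rewrite invr_gt0.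
  have := @argmin_subdiff R p G 4^-1 (tX w' + 4 *: tV w) (tY w') pG cG k0.
  have -> : 4^-1 *: (tX w' + 4 *: tV w - tY w') = tV w'.
    by rewrite hV; apply/matrixP => i j; rewrite !mxE; field; done.
  apply => Y'; have := hY Y'; by rewrite !Yobj_eq.
Qed.

Lemma step_ex (F G : M -> \bar R) z0 g0 z1 g1 :
  proper_fun F -> lower_semicontinuous F -> subdiff F z0 g0 ->
  proper_fun G -> lower_semicontinuous G -> subdiff G z1 g1 ->
  forall w, exists w', ladmm_step F G c1 c4 w w'.
Proof.
move=> pF lF sF pG lG sG w.
have [X1 hX1] := @argmin_exists R p F 1 (Cx w) _ _ pF lF sF ltr01.
have k0 : 0 < 4^-1 :> R by rewrite invr_gt0.
have [Y1 hY1] := @argmin_exists R p G 4^-1 (X1 + 4 *: tV w) _ _ pG lG sG k0.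
exists (X1, Y1, tV w + hadamard (ew_inv c4) (X1 - Y1)); split => //.
- by move=> X'; rewrite !Xobj_eq; exact: hX1.
- by move=> Y'; rewrite !Yobj_eq; exact: hY1.
Qed.

End Steps.


Section Core.
Variables (R : realType) (p : nat).
Notation M := 'M[R]_p.
Notation ip := (@frob_inner R p).
Variables (F G : M -> \bar R) (x y v : nat -> M).
Hypotheses (pF : proper_fun F) (lF : lower_semicontinuous F)
  (pG : proper_fun G) (lG : lower_semicontinuous G).
Hypothesis hs : forall k,
  [/\ subdiff F (x k.+1) (x k - x k.+1 - v k - 4^-1 *: (x k - y k)),
      subdiff G (y k.+1) (v k.+1) & v k.+1 = v k + 4^-1 *: (x k.+1 - y k.+1)].

Definition Phi (xs vs : M) k := 3/4 * ip (x k - xs) (x k - xs) +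
  4 * ip (v k - vs) (v k - vs) + 4^-1 * ip (y k - xs) (y k - xs).
Definition Dd k := 3/4 * ip (x k - x k.+1) (x k - x k.+1) +
  4 * ip (v k.+1 - v k) (v k.+1 - v k) + 4^-1 * ip (y k.+1 - y k) (y k.+1 - y k).

Lemma Phi0 xs vs k : 0 <= Phi xs vs k.
Proof.
rewrite /Phi; have := ip_ge0 (x k - xs); have := ip_ge0 (v k - vs);
have := ip_ge0 (y k - xs); lra.
Qed.

Lemma Dd0 k : 0 <= Dd k.
Proof.
rewrite /Dd; have := ip_ge0 (x k - x k.+1); have := ip_ge0 (v k.+1 - v k);
have := ip_ge0 (y k.+1 - y k); lra.
Qed.

Lemma fejer xs vs : subdiff F xs (- vs) -> subdiff G xs vs ->
  forall k, Phi xs vs k.+2 + Dd k.+1 <= Phi xs vs k.+1.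
Proof.
move=> sF sG k.
have [sF1 sG1 hv1] := hs k.+1.
have [_ sG0 _] := hs k.
have H1 := subdiff_mono sF1 sF.
have H2 := subdiff_mono sG1 sG.
have H3 := subdiff_mono sG1 sG0.
rewrite opprK in H1.
have E := fejer_id (x k.+1) (y k.+1) (v k.+1) (x k.+2) (y k.+2) xs vs.
rewrite /= -hv1 in E.
rewrite /Phi /Dd; lra.
Qed.

Lemma mono xs vs : subdiff F xs (- vs) -> subdiff G xs vs ->
  forall m k, (m <= k)%N -> Phi xs vs k.+1 <= Phi xs vs m.+1.
Proof.
move=> sF sG m k /subnK <-; elim: (k - m)%N => [|d IH] //=.
rewrite addSn; have := fejer sF sG (d + m); have := Dd0 (d + m).+1; lra.
Qed.


Lemma core xs vs : subdiff F xs (- vs) -> subdiff G xs vs ->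
  exists xb vb, [/\ subdiff F xb (- vb), subdiff G xb vb &
   forall e, 0 < e -> \forall k \near \oo, ip (x k - xb) (x k - xb) +
      ip (y k - xb) (y k - xb) + ip (v k - vb) (v k - vb) < e].
Proof.
move=> sF sG.
pose P k := Phi xs vs k.+1.
have hPn : nonincreasing_seq P.
  apply/nonincreasing_seqP => k; rewrite /P.
  by have := fejer sF sG k; have := Dd0 k.+1; lra.
have hPlb : has_lbound (range P) by exists 0 => _ [k _ <-]; exact: Phi0.
have cP := nonincreasing_cvgn hPn hPlb.
set lP := inf _ in cP.
have cP1 : (fun k => P k.+1) @ \oo --> lP by move: cP; rewrite -cvg_shiftS.
have hD : (fun k => Dd k.+1) @ \oo --> 0.
  apply: (@squeeze_cvgr _ _ _ _ (fun=> 0) (fun k => P k - P k.+1)).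
  - near=> k; apply/andP; split; first exact: Dd0.
    by rewrite /P; have := fejer sF sG k; lra.
  - exact: cvg_cst.
  - by rewrite -(subrr lP); apply: cvgB.
pose dx k := x k.+1 - x k.+2.
pose dv k := v k.+2 - v k.+1.
pose dy k := y k.+2 - y k.+1.
have hdx : ecvg dx 0.
  apply: (@ecvg0_of _ _ _ _ (4/3)) hD => k; rewrite /dx /Dd.
  have := ip_ge0 (v k.+2 - v k.+1); have := ip_ge0 (y k.+2 - y k.+1); lra.
have hdv : ecvg dv 0.
  apply: (@ecvg0_of _ _ _ _ (4^-1)) hD => k; rewrite /dv /Dd.
  have := ip_ge0 (x k.+1 - x k.+2); have := ip_ge0 (y k.+2 - y k.+1); lra.
have hdy : ecvg dy 0.
  apply: (@ecvg0_of _ _ _ _ 4) hD => k; rewrite /dy /Dd.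
  have := ip_ge0 (x k.+1 - x k.+2); have := ip_ge0 (v k.+2 - v k.+1); lra.
pose B := Phi xs vs 1.
have hB : forall k, Phi xs vs k.+2 <= B.
  by move=> k; apply: (mono sF sG (m := 0)).
have bx : forall ij : 'I_p * 'I_p, exists Mb : R, forall k,
    `|x k.+2 ij.1 ij.2| <= Mb.
  move=> [i j]; exists (`|xs i j| + (1 + 4/3 * B)) => k /=.
  have -> : x k.+2 i j = (x k.+2 - xs) i j + xs i j by rewrite !mxE subrK.
  apply: le_trans (ler_normD _ _) _; rewrite addrC lerD2l.
  apply: le_trans (entry_bound _ i j) _; rewrite lerD2l.
  have := hB k; rewrite /Phi.
  have := ip_ge0 (v k.+2 - vs); have := ip_ge0 (y k.+2 - xs); lra.
have [f1 hf1 hc1] := multiBW bx.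
have bv : forall ij : 'I_p * 'I_p, exists Mb : R, forall k,
    `|v (f1 k).+2 ij.1 ij.2| <= Mb.
  move=> [i j]; exists (`|vs i j| + (1 + 4^-1 * B)) => k /=.
  have -> : v (f1 k).+2 i j = (v (f1 k).+2 - vs) i j + vs i j by rewrite !mxE subrK.
  apply: le_trans (ler_normD _ _) _; rewrite addrC lerD2l.
  apply: le_trans (entry_bound _ i j) _; rewrite lerD2l.
  have := hB (f1 k); rewrite /Phi.
  have := ip_ge0 (x (f1 k).+2 - xs); have := ip_ge0 (y (f1 k).+2 - xs); lra.
have [f2 hf2 hc2] := multiBW bv.
pose f := f1 \o f2.
have hf : increasing_seq f by exact: incr_comp.
pose xb : M := \matrix_(i, j) limn (fun n => x (f1 n).+2 i j).
pose vb : M := \matrix_(i, j) limn (fun n => v (f1 (f2 n)).+2 i j).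
have hX1 : ecvg (fun n => x (f1 n).+2) xb.
  by move=> i j; rewrite mxE; exact: (hc1 (i, j)).
have hX : ecvg (fun n => x (f n).+2) xb.
  exact: (ecvg_sub (A := fun n => x (f1 n).+2) hf2 hX1).
have hV : ecvg (fun n => v (f n).+2) vb.
  by move=> i j; rewrite mxE; exact: (hc2 (i, j)).
have hvk : forall k i j, v k.+2 i j = v k.+1 i j + 4^-1 * (x k.+2 i j - y k.+2 i j).
  move=> k i j; have [_ _ h] := hs k.+1.
  by move/matrixP: h => /(_ i j); rewrite !mxE.
have eY : forall k, y k.+2 = x k.+2 - 4 *: dv k.
  move=> k; apply/matrixP => i j; rewrite /dv !mxE hvk; field; done.
have eU : forall k, x k.+1 - x k.+2 - v k.+1 - 4^-1 *: (x k.+1 - y k.+1) =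
    dx k + dv k - 4^-1 *: (dx k + 4 *: dv k + dy k) - v k.+2.
  move=> k; apply/matrixP => i j; rewrite /dx /dv /dy !mxE hvk; field; done.
have hY : ecvg (fun n => y (f n).+2) xb.
  have := ecvgB hX (ecvgZ (c := 4) (ecvg_sub hf hdv)); rewrite scaler0 subr0.
  by apply: ecvg_ext => n /=; rewrite eY.
have hU : ecvg (fun n => x (f n).+1 - x (f n).+2 - v (f n).+1 -
    4^-1 *: (x (f n).+1 - y (f n).+1)) (- vb).
  have h0 := ecvgB (ecvgD (ecvg_sub hf hdx) (ecvg_sub hf hdv))
    (ecvgZ (c := 4^-1) (ecvgD (ecvgD (ecvg_sub hf hdx) (ecvgZ (c := 4) (ecvg_sub hf hdv)))
      (ecvg_sub hf hdy))).
  have := ecvgB h0 hV.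
  rewrite !(scaler0, addr0, subr0, add0r, oppr0, sub0r).
  by apply: ecvg_ext => n /=; rewrite eU.
have sFb : subdiff F xb (- vb).
  apply: (subdiff_limit pF lF _ hX hU) => n.
  by have [h _ _] := hs (f n).+1.
have sGb : subdiff G xb vb.
  apply: (subdiff_limit pG lG _ hY hV) => n.
  by have [_ h _] := hs (f n).+1.
exists xb, vb; split => // e e0.
have hx0 : ecvg (fun n => x (f n).+2 - xb) 0 by have := ecvgB hX (ecvg_cst (L := xb)); rewrite subrr.
have hv0 : ecvg (fun n => v (f n).+2 - vb) 0 by have := ecvgB hV (ecvg_cst (L := vb)); rewrite subrr.
have hy0 : ecvg (fun n => y (f n).+2 - xb) 0 by have := ecvgB hY (ecvg_cst (L := xb)); rewrite subrr.
have ip00 : ip 0 0 = 0.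
  by rewrite /frob_inner big1 // => i _; rewrite big1 // => j _; rewrite mxE mulr0.
have cPhi : (fun n => Phi xb vb (f n).+2) @ \oo --> 0.
  have := cvgD (cvgD (cvgM (cvg_cst (3/4 : R)) (cvg_ip hx0 hx0))
    (cvgM (cvg_cst (4 : R)) (cvg_ip hv0 hv0))) (cvgM (cvg_cst (4^-1 : R)) (cvg_ip hy0 hy0)).
  by rewrite ip00 !mulr0 !addr0; apply.
have e4 : 0 < e / 4 by rewrite divr_gt0.
have [n hn] : exists n, Phi xb vb (f n).+2 < e / 4.
  by have [n hn] := filter_ex (cvgr_lt 0 cPhi (e / 4) e4); exists n.
near=> k.
have hk : ((f n).+2 <= k)%N by near: k; exists (f n).+2.
have k0 : (0 < k)%N by apply: leq_trans hk.
have hm : Phi xb vb k <= Phi xb vb (f n).+2.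
  rewrite -[in X in X <= _](prednK k0); apply: mono => //.
  by rewrite -ltnS prednK.
move: hm hn; rewrite /Phi.
have := ip_ge0 (x k - xb); have := ip_ge0 (y k - xb); have := ip_ge0 (v k - vb).
lra.
Unshelve. all: end_near. Qed.
End Core.

Unset Implicit Arguments. Set Strict Implicit.

Theorem theorem2 (R : realType) (p : nat) (F G : 'M[R]_p -> \bar R)
    (HF : proper_closed_convex F) (HG : proper_closed_convex G)
    (Hne : exists w : triple R p, KKT F G w)
    (w0 : triple R p) :
  exists alpha beta : nat -> 'M[R]_p,
    (forall k, in_S (alpha k) (beta k)) /\
    (exists omega : nat -> triple R p, ladmm_seq F G alpha beta w0 omega) /\
    (forall omega : nat -> triple R p, ladmm_seq F G alpha beta w0 omega ->
       exists wstar : triple R p,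
         KKT F G wstar /\
         (fun k => triple_norm (triple_sub (omega k) wstar)) @ \oo --> (0 : R)).
Proof.
case: HF => pF lF cF; case: HG => pG lG cG.
case: Hne => ws [hxy sF sG].
exists (fun=> const_mx 1), (fun=> const_mx 4).
split; first by move=> k i j; rewrite !mxE; apply/andP; split; lra.
split.
  have step := step_ex pF lF sF pG lG sG.
  have [nx hnx] := choice step.
  by exists (fun k => iter k nx w0); split => // k; exact: hnx.
move=> omega [_ hst].
have hs := fun k => step_sub pF cF pG cG (hst k).
have sG' : subdiff G (tX ws) (tV ws) by rewrite hxy.
have [xb [vb [sFb sGb hconv]]] := core (x := fun k => tX (omega k))
  (y := fun k => tY (omega k)) (v := fun k => tV (omega k)) pF lF pG lG hs sF sG'.
exists (xb, xb, vb); split; first by split.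
apply/cvgrPdist_lt => e e0.
have e2 : 0 < e ^+ 2 by rewrite exprn_gt0.
near=> k.
rewrite sub0r normrN /triple_norm /triple_sub /= !frob_norm_sq.
rewrite ger0_norm ?sqrtr_ge0 //.
rewrite -[X in _ < X](@ger0_norm _ e) ?(ltW e0) // -sqrtr_sqr ltr_sqrt //.
near: k; exact: hconv e2.
Unshelve. all: end_near. Qed.
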